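(* For every graph $G$ and every integer $k\ge 0$, $\pi^*(G+K_k)=\pi^*(G)+k$.
   Context: All graphs are finite and simple. $A+B$ denotes the complete join of graphs $A$ and $B$: the disjoint union of $A$ and $B$ together with all edges between $V(A)$ and $V(B)$; $K_k$ is the complete graph on $k$ vertices. A lazy walk in a graph $G$ is a sequence of vertices $v_1,\dots,v_m$ such that for each $i<m$, either $v_iv_{i+1}\in E(G)$ or $v_i=v_{i+1}$. For a colouring $\phi$ of $V(G)$, a lazy walk $v_1,\dots,v_{2t}$ is $\phi$-repetitive if $\phi(v_i)=\phi(v_{i+t})$ for each $i\in\{1,\dots,t\}$. A colouring $\phi$ is strongly nonrepetitive if for every $\phi$-repetitive lazy walk $v_1,\dots,v_{2t}$ there exists $i\in\{1,\dots,t\}$ with $v_i=v_{i+t}$. $\pi^*(G)$ denotes the minimum number of colours in a strongly nonrepetitive colouring of $G$. *)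

(* Defs.v *)
From mathcomp Require Import all_boot.
From Stdlib Require Import ClassicalEpsilon.
Set Implicit Arguments. Unset Strict Implicit. Unset Printing Implicit Defensive.

(* A finite simple graph: vertex type V : finType with a symmetric,
   irreflexive adjacency relation e (these hypotheses are in the theorem). *)

Definition lazy_step (V : finType) (e : rel V) (x y : V) : Prop :=
  e x y \/ x = y.

Definition lazy_walk (V : finType) (e : rel V) (m : nat) (w : nat -> V) : Prop :=
  forall i, i.+1 < m -> lazy_step e (w i) (w i.+1).

Definition repetitive (V : finType) (C : Type) (phi : V -> C) (t : nat) (w : nat -> V) : Prop :=
  forall i, i < t -> phi (w i) = phi (w (i + t)).

Definition strongly_nonrep (V : finType) (e : rel V) (C : Type) (phi : V -> C) : Prop :=
  forall (t : nat) (w : nat -> V), 0 < t ->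
    lazy_walk e (t + t) w -> repetitive phi t w ->
    exists i, i < t /\ w i = w (i + t).

Definition snr_colourable (V : finType) (e : rel V) (c : nat) : Prop :=
  exists phi : V -> nat, (forall v, phi v < c) /\ strongly_nonrep e phi.

Definition pb (P : Prop) : bool :=
  if excluded_middle_informative P then true else false.

Lemma pbP (P : Prop) : reflect P (pb P).
Proof. rewrite /pb; case: excluded_middle_informative => h; by constructor. Qed.

Lemma snr_colourable_exists (V : finType) (e : rel V) :
  exists c, pb (snr_colourable e c).
Proof.
exists #|V|; apply/pbP; exists (fun v => nat_of_ord (enum_rank v)); split.
  by move=> v; exact: ltn_ord.
move=> t w t0 _ rep; exists 0; split => //.
have := rep 0 t0 => /= h; apply: enum_rank_inj; exact: val_inj.
Qed.

Definition pistar (V : finType) (e : rel V) : nat :=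
  ex_minn (snr_colourable_exists e).

Definition join_complete (V : finType) (e : rel V) (k : nat) : rel (V + 'I_k)%type :=
  fun x y => match x, y with
  | inl a, inl b => e a b
  | inr i, inr j => i != j
  | _, _ => true
  end.
Arguments join_complete [V] e k.

(* Main.v *)
Require Import Defs.
From mathcomp Require Import all_boot zify.
From Stdlib Require Import ClassicalEpsilon.

Lemma pistar_spec (V : finType) (e : rel V) : snr_colourable e (pistar e).
Proof. rewrite /pistar; case: ex_minnP => m /pbP. done. Qed.

Lemma pistar_min (V : finType) (e : rel V) c : snr_colourable e c -> pistar e <= c.
Proof. rewrite /pistar; case: ex_minnP => m _ H Hc; apply: H; exact/pbP. Qed.

Lemma upper (V : finType) (e : rel V) (k c : nat) :
  snr_colourable e c -> snr_colourable (join_complete e k) (c + k).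
Proof.
move=> [phi [Hlt Hs]].
exists (fun x : (V + 'I_k)%type => match x with inl v => phi v | inr i => c + nat_of_ord i end); split.
  by case=> [v|i]; [have := Hlt v; lia | have := ltn_ord i; lia].
move=> t w t0 Hw Hr.
case: (excluded_middle_informative (exists j r, j < t + t /\ w j = inr r)).
  move=> [j [r [Hj Hwj]]].
  case: (ltnP j t) => Hjt.
    exists j; split => //; have := Hr j Hjt; rewrite Hwj.
    case: (w (j + t)) => [v|r'] /=; first by have := Hlt v; lia.
    by move=> h; congr inr; apply: val_inj => /=; lia.
  exists (j - t); split; first lia.
  have := Hr (j - t) ltac:(lia); have -> : j - t + t = j by lia.
  rewrite Hwj; case: (w (j - t)) => [v|r'] /=; first by have := Hlt v; lia.
  by move=> h; congr inr; apply: val_inj => /=; lia.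
move=> Hno.
have Hin : forall j, j < t + t -> exists v, w j = inl v.
  move=> j Hj; case E: (w j) => [v|r]; first by exists v.
  by exfalso; apply: Hno; exists j, r.
have [v0 _] := Hin 0 ltac:(lia).
pose w' j := match w j with inl v => v | inr _ => v0 end.
have Hw' : forall j, j < t + t -> w j = inl (w' j).
  by move=> j /Hin [v Hv]; rewrite /w' Hv.
have [i [Hi Heq]] : exists i, i < t /\ w' i = w' (i + t).
  apply: (Hs t w' t0).
    move=> j Hj; have := Hw j Hj; rewrite /lazy_step (Hw' j) ?(Hw' j.+1) //; try lia.
    by case=> [h|[->]]; [left|right].
  move=> j Hj; have := Hr j Hj; rewrite (Hw' j) ?(Hw' (j + t)) //; lia.
exists i; split => //; rewrite (Hw' i) ?(Hw' (i + t)) ?Heq //; lia.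
Qed.
Lemma count_lt (S : seq nat) x y : x < y -> x \notin S ->
  count (fun z => z \notin S) (iota 0 x) < count (fun z => z \notin S) (iota 0 y).
Proof.
move=> Hxy Hx.
have -> : y = x + (y - x) by lia.
rewrite iotaD count_cat add0n.
have -> : y - x = (y - x - 1).+1 by lia.
by rewrite /= Hx; lia.
Qed.

Lemma lower (V : finType) (e : rel V) (k c : nat) :
  snr_colourable (join_complete e k) c -> k <= c /\ snr_colourable e (c - k).
Proof.
move=> [psi [Hlt Hs]].
have key : forall r x, x <> inr r -> psi x <> psi (inr r).
  move=> r x Hx Heq.
  have [i [Hi Hwi]] : exists i, i < 1 /\ (fun n => if n == 0 then inr r else x) i = (fun n => if n == 0 then inr r else x) (i + 1).
    apply: Hs => //.
      move=> j Hj; have -> : j = 0 by lia.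
      left; rewrite /=; case: x Hx {Heq} => [v|r'] Hx //=.
      by apply/eqP => h; apply: Hx; rewrite h.
    by move=> j Hj; have -> : j = 0 by lia; rewrite /= Heq.
  have E : i = 0 by lia.
  by subst i; apply: Hx; move: Hwi => /= ->.
pose S := map (fun i => psi (inr i)) (enum 'I_k).
have uS : uniq S.
  rewrite map_inj_uniq ?enum_uniq // => i j h.
  by case: (i =P j) => // ne; exfalso; apply: (key j (inr i)) => // [[]].
have szS : size S = k by rewrite size_map size_enum_ord.
have ltS : forall y, y \in S -> y < c by move=> y /mapP [i _ ->].
have notS : forall v, psi (inl v) \notin S.
  move=> v; apply/negP => /mapP [i _ h]; exact: (key i (inl v)).
have cnt : count (mem S) (iota 0 c) = k.
  rewrite -size_filter -szS; apply: perm_size; apply: uniq_perm.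
  - exact: filter_uniq (iota_uniq _ _).
  - exact: uS.
  - move=> y; rewrite mem_filter mem_iota; apply/idP/idP => [/andP[] //|yS]; apply/andP; split => //.
    by have := ltS y yS; lia.
have tot : count (fun z => z \notin S) (iota 0 c) = c - k.
  have := count_predC (mem S) (iota 0 c); rewrite size_iota cnt.
  have -> : count (predC (mem S)) (iota 0 c) = count (fun z => z \notin S) (iota 0 c) by [].
  lia.
have kc : k <= c by rewrite -cnt; have := count_size (mem S) (iota 0 c); rewrite size_iota.
split => //.
pose f x := count (fun z => z \notin S) (iota 0 x).
have finj : forall x y, x \notin S -> y \notin S -> f x = f y -> x = y.
  move=> x y hx hy h; case: (ltngtP x y) => // hxy.
    by have := @count_lt S _ _ hxy hx; rewrite -/(f x) -/(f y) h ltnn.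
  by have := @count_lt S _ _ hxy hy; rewrite -/(f x) -/(f y) h ltnn.
exists (fun v => f (psi (inl v))); split.
  move=> v; have Hv := Hlt (inl v).
  have := @count_lt S _ _ Hv (notS v); rewrite tot //.
move=> t w t0 Hw Hr.
have [i [Hi Hwi]] : exists i, i < t /\ (inl (w i) : (V + 'I_k)%type) = inl (w (i + t)).
  apply: (Hs t (fun n => inl (w n))) => //.
    move=> j Hj; case: (Hw j Hj) => [h|->]; [by left|by right].
  move=> j Hj; apply: finj; [exact: notS|exact: notS|exact: Hr].
by exists i; split => //; case: Hwi.
Qed.

Theorem mainTheorem9 (V : finType) (e : rel V) (k : nat) :
  symmetric e -> irreflexive e ->
  pistar (join_complete e k) = pistar e + k.
Proof.
move=> _ _; apply/eqP; rewrite eqn_leq; apply/andP; split.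
  apply: pistar_min. exact: (@upper V e k _ (pistar_spec _ e)).
have [kc H] := @lower V e k _ (pistar_spec _ (join_complete e k)).
have := pistar_min _ _ _ H; lia.
Qed.
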